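(* Let $I$ (inputs) and $O$ (outputs) be disjoint finite sets and let $\Phi_{\mathrm{CTL}^*}$ be a CTL* state formula in positive normal form over $I$ and $O$. Let $F_{\mathit{exist}}$ (resp. $F_{\mathit{univ}}$) be the set of subformulas of $\Phi_{\mathrm{CTL}^*}$ of the form $\mathsf E\varphi$ (resp. $\mathsf A\varphi$). For each $\mathsf E\varphi\in F_{\mathit{exist}}$ fix a nondeterministic B\''uchi word automaton for $\varphi$ (where state subformulas of $\varphi$ are treated as atomic propositions) with state set $Q_\varphi$, and let $k=\sum_{\mathsf E\varphi\in F_{\mathit{exist}}}|Q_\varphi|$. Introduce new outputs: for each $\mathsf E\varphi\in F_{\mathit{exist}}$ an output $v_{\mathsf E\varphi}$ ranging over $\{0,\dots,k\}$; for each $\mathsf A\varphi\in F_{\mathit{univ}}$ a Boolean output $p_{\mathsf A\varphi}$; and for each $j\in\{1,\dots,k\}$ an output $d_j$ ranging over $2^I$, where the proposition $d_j$ holds at a position iff the current input equals the current value of $d_j$. For a formula $\psi$ let $\psi'$ be obtained by replacing every maximal subformula $\mathsf E\chi$ by $v_{\mathsf E\chi}\neq0$ and every maximal subformula $\mathsf A\chi$ by $p_{\mathsf A\chi}$. Define the LTL formula $$\Phi_{\mathrm{LTL}}=\Phi'_{\mathrm{CTL}^*}\wedge\bigwedge_{\mathsf E\varphi\in F_{\mathit{exist}}}\ \bigwedge_{j=1}^{k}\mathsf G\big[v_{\mathsf E\varphi}=j\rightarrow(\mathsf G d_j\rightarrow\varphi')\big]\wedge\bigwedge_{\mathsf A\varphi\in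 F_{\mathit{univ}}}\mathsf G\big[p_{\mathsf A\varphi}\rightarrow\varphi'\big].$$ Then $\Phi_{\mathrm{CTL}^*}$ is realisable (with inputs $I$ and outputs $O$) if and only if $\Phi_{\mathrm{LTL}}$ is realisable (with inputs $I$ and outputs $O$ together with all new outputs).
   Context: A Moore system $(I,O,T,t_0,\tau,\mathit{out})$ has finite states $T$, initial state $t_0$, total transition function $\tau:T\times 2^I\to T$ and output labelling $\mathit{out}:T\to 2^O$. Its computations are words $(\mathit{out}(t_1)\cup e_1)(\mathit{out}(t_2)\cup e_2)\dots$ with $t_1=t_0$, $e_j\in 2^I$, $t_{j+1}=\tau(t_j,e_j)$; its computation tree has nodes $(2^I)^*$ with node $w$ labelled $\mathit{out}(\tau(t_0,w))$. A specification is realisable if some Moore system with the given inputs and outputs satisfies it: for an LTL formula, all computations satisfy it; for a CTL* formula, its computation tree satisfies it at the root. CTL* with inputs in positive normal form: state formulas are $\mathit{true},\mathit{false}$, outputs and negated outputs, $\wedge,\vee$ of state formulas, and $\mathsf A\varphi,\mathsf E\varphi$; path formulas are state formulas, inputs and negated inputs, $\wedge,\vee,\mathsf X,\mathsf U,\mathsf R$ of path formulas; on a tree path $n_1n_2\dots$ with $n_2=n_1\cdot e$ an input $i$ holds iff $i\in e$, and the rest of the semantics is standard. *)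

(* Defs.v *)
From HB Require Import structures.
From mathcomp Require Import all_boot.

Set Implicit Arguments.
Unset Strict Implicit.
Unset Printing Implicit Defensive.

(* One syntactic type; state formulas are singled out by [is_state].        *)
Inductive form (I O : Type) :=
| FTrue | FFalse
| FOut of O | FNOut of O
| FIn of I | FNIn of I              (* inputs / negated inputs (path)      *)
| FAnd of form I O & form I O
| FOr of form I O & form I O
| FX of form I O
| FU of form I O & form I O
| FR of form I O & form I O
| FA of form I O
| FE of form I O.

Arguments FTrue {I O}.
Arguments FFalse {I O}.
Arguments FOut {I O}.
Arguments FNOut {I O}.
Arguments FIn {I O}.
Arguments FNIn {I O}.

Section FormEq.
Variables (I O : countType).

Fixpoint form_code (f : form I O) : GenTree.tree (I + O) :=
  match f with
  | FTrue => GenTree.Node 0 [::]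
  | FFalse => GenTree.Node 1 [::]
  | FOut o => GenTree.Node 2 [:: GenTree.Leaf (inr o)]
  | FNOut o => GenTree.Node 3 [:: GenTree.Leaf (inr o)]
  | FIn i => GenTree.Node 4 [:: GenTree.Leaf (inl i)]
  | FNIn i => GenTree.Node 5 [:: GenTree.Leaf (inl i)]
  | FAnd a b => GenTree.Node 6 [:: form_code a; form_code b]
  | FOr a b => GenTree.Node 7 [:: form_code a; form_code b]
  | FX a => GenTree.Node 8 [:: form_code a]
  | FU a b => GenTree.Node 9 [:: form_code a; form_code b]
  | FR a b => GenTree.Node 10 [:: form_code a; form_code b]
  | FA a => GenTree.Node 11 [:: form_code a]
  | FE a => GenTree.Node 12 [:: form_code a]
  end.

Fixpoint form_decode (t : GenTree.tree (I + O)) : option (form I O) :=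
  match t with
  | GenTree.Node 0 [::] => Some FTrue
  | GenTree.Node 1 [::] => Some FFalse
  | GenTree.Node 2 [:: GenTree.Leaf (inr o)] => Some (FOut o)
  | GenTree.Node 3 [:: GenTree.Leaf (inr o)] => Some (FNOut o)
  | GenTree.Node 4 [:: GenTree.Leaf (inl i)] => Some (FIn i)
  | GenTree.Node 5 [:: GenTree.Leaf (inl i)] => Some (FNIn i)
  | GenTree.Node 6 [:: t1; t2] =>
      match form_decode t1, form_decode t2 with
      | Some a, Some b => Some (FAnd a b) | _, _ => None end
  | GenTree.Node 7 [:: t1; t2] =>
      match form_decode t1, form_decode t2 with
      | Some a, Some b => Some (FOr a b) | _, _ => None end
  | GenTree.Node 8 [:: t1] =>
      match form_decode t1 with Some a => Some (FX a) | None => None end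
  | GenTree.Node 9 [:: t1; t2] =>
      match form_decode t1, form_decode t2 with
      | Some a, Some b => Some (FU a b) | _, _ => None end
  | GenTree.Node 10 [:: t1; t2] =>
      match form_decode t1, form_decode t2 with
      | Some a, Some b => Some (FR a b) | _, _ => None end
  | GenTree.Node 11 [:: t1] =>
      match form_decode t1 with Some a => Some (FA a) | None => None end
  | GenTree.Node 12 [:: t1] =>
      match form_decode t1 with Some a => Some (FE a) | None => None end
  | _ => None
  end.

Lemma form_codeK : pcancel form_code form_decode.
Proof. by elim=> //= [a -> b ->|a -> b ->|a ->|a -> b ->|a -> b ->|a ->|a ->]. Qed.

HB.instance Definition _ := Countable.copy (form I O) (pcan_type form_codeK).
End FormEq.

Section Defs.
Variables (I O : finType).
Notation form := (form I O).

Fixpoint is_state (f : form) : bool :=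
  match f with
  | FTrue | FFalse | FOut _ | FNOut _ | FA _ | FE _ => true
  | FAnd a b | FOr a b => is_state a && is_state b
  | _ => false
  end.

Fixpoint subformulas (f : form) : seq form :=
  f :: match f with
       | FAnd a b | FOr a b | FU a b | FR a b => subformulas a ++ subformulas b
       | FX a | FA a | FE a => subformulas a
       | _ => [::]
       end.

Definition is_E (f : form) := if f is FE _ then true else false.
Definition is_A (f : form) := if f is FA _ then true else false.

Definition Fexist (Phi : form) : seq form := undup [seq g <- subformulas Phi | is_E g].
Definition Funiv (Phi : form) : seq form := undup [seq g <- subformulas Phi | is_A g].

Definition body (f : form) : form :=
  match f with FE p | FA p => p | _ => f end.

Record moore (In Out : Type) := Moore {
  mstate : finType;
  minit : mstate;
  mtrans : mstate -> In -> mstate;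
  mout : mstate -> Out }.

Fixpoint mrun In Out (M : moore In Out) (e : nat -> In) (n : nat) : mstate M :=
  if n is n'.+1 then mtrans (mrun M e n') (e n') else minit M.

Definition computation In Out (M : moore In Out) (e : nat -> In) : nat -> In * Out :=
  fun j => (e j, mout (mrun M e j)).

(* computation tree: node w : (2^I)^* labelled out(tau(t0, w)) *)
Definition comp_tree Out (M : moore {set I} Out) (w : seq {set I}) : Out :=
  mout (foldl (mtrans (m:=M)) (minit M) w).

Definition sfx T (e : nat -> T) (n : nat) : nat -> T := fun m => e (n + m).

(* [csat lab f w e]: path formula f holds on the tree path starting at node w
   and continuing with directions e 0, e 1, ... (nodes w, w.e0, w.e0.e1, ...).
   State formulas only depend on the first node w. *)
Fixpoint csat (lab : seq {set I} -> {set O}) (f : form)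
    (w : seq {set I}) (e : nat -> {set I}) : Prop :=
  match f with
  | FTrue => True
  | FFalse => False
  | FOut o => o \in lab w
  | FNOut o => o \notin lab w
  | FIn i => i \in e 0
  | FNIn i => i \notin e 0
  | FAnd a b => csat lab a w e /\ csat lab b w e
  | FOr a b => csat lab a w e \/ csat lab b w e
  | FX a => csat lab a (rcons w (e 0)) (sfx e 1)
  | FU a b => exists n, csat lab b (w ++ mkseq e n) (sfx e n) /\
                 forall m, m < n -> csat lab a (w ++ mkseq e m) (sfx e m)
  | FR a b => forall n, csat lab b (w ++ mkseq e n) (sfx e n) \/
                 exists m, m < n /\ csat lab a (w ++ mkseq e m) (sfx e m)
  | FA a => forall e' : nat -> {set I}, csat lab a w e'
  | FE a => exists e' : nat -> {set I}, csat lab a w e'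
  end.

(* state formula Phi holds at node w (the path argument is irrelevant) *)
Definition state_sat (lab : seq {set I} -> {set O}) (Phi : form) (w : seq {set I}) :=
  csat lab Phi w (fun _ => set0).

Definition ctl_realisable (Phi : form) : Prop :=
  exists M : moore {set I} {set O}, state_sat (comp_tree M) Phi [::].

Record nba (Sigma : Type) := Nba {
  nstate : finType;
  ninit : pred nstate;
  ntrans : nstate -> Sigma -> nstate -> bool;
  nacc : pred nstate }.

Definition nba_accepts Sigma (A : nba Sigma) (w : nat -> Sigma) : Prop :=
  exists r : nat -> nstate A,
    [/\ @ninit _ A (r 0), forall n, @ntrans _ A (r n) (w n) (r n.+1)
      & forall n, exists2 m, n <= m & @nacc _ A (r m)].

(* maximal state subformulas of a path formula: its atomic propositions
   (besides the inputs) *)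
Fixpoint state_atoms (f : form) : seq form :=
  if is_state f then [:: f] else
  match f with
  | FAnd a b | FOr a b | FU a b | FR a b => state_atoms a ++ state_atoms b
  | FX a => state_atoms a
  | _ => [::]
  end.

(* letters for the automaton of phi: the current input, and a valuation of the
   maximal state subformulas of phi *)
Definition nletter (phi : form) :=
  ({set I} * ({g : form | g \in state_atoms phi} -> bool))%type.

Definition atom_val (phi : form) (val : {g : form | g \in state_atoms phi} -> bool)
    (g : form) : bool :=
  if insub g is Some s then val s else false.

Fixpoint wsat (phi f : form) (w : nat -> nletter phi) : Prop :=
  if is_state f then is_true (atom_val (w 0).2 f) else
  match f with
  | FIn i => i \in (w 0).1
  | FNIn i => i \notin (w 0).1
  | FAnd a b => @wsat phi a w /\ @wsat phi b w
  | FOr a b => @wsat phi a w \/ @wsat phi b w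
  | FX a => @wsat phi a (sfx w 1)
  | FU a b => exists n, @wsat phi b (sfx w n) /\
                 forall m, m < n -> @wsat phi a (sfx w m)
  | FR a b => forall n, @wsat phi b (sfx w n) \/
                 exists m, m < n /\ @wsat phi a (sfx w m)
  | _ => False
  end.

Definition nba_for (phi : form) (A : nba (nletter phi)) : Prop :=
  forall w, nba_accepts A w <-> @wsat phi phi w.

Inductive ltl (Sigma : Type) :=
| LAtom of (Sigma -> bool)
| LNot of ltl Sigma
| LAnd of ltl Sigma & ltl Sigma
| LOr of ltl Sigma & ltl Sigma
| LX of ltl Sigma
| LU of ltl Sigma & ltl Sigma
| LR of ltl Sigma & ltl Sigma.

Fixpoint lsat Sigma (f : ltl Sigma) (w : nat -> Sigma) : Prop :=
  match f with
  | LAtom p => p (w 0)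
  | LNot a => ~ lsat a w
  | LAnd a b => lsat a w /\ lsat b w
  | LOr a b => lsat a w \/ lsat b w
  | LX a => lsat a (sfx w 1)
  | LU a b => exists n, lsat b (sfx w n) /\ forall m, m < n -> lsat a (sfx w m)
  | LR a b => forall n, lsat b (sfx w n) \/ exists m, m < n /\ lsat a (sfx w m)
  end.

Definition LTrue Sigma : ltl Sigma := LAtom (fun _ => true).
Definition LImp Sigma (a b : ltl Sigma) := LOr (LNot a) b.
Definition LG Sigma (a : ltl Sigma) := LR (LAtom (fun _ => false)) a.
Definition LBigAnd Sigma (s : seq (ltl Sigma)) := foldr (@LAnd Sigma) (LTrue Sigma) s.

Definition ltl_realisable Out (f : ltl ({set I} * Out)) : Prop :=
  exists M : moore {set I} Out, forall e : nat -> {set I}, lsat f (computation M e).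

(* new outputs: v_{E phi} in {0..k}, p_{A phi} Boolean, d_j in 2^I (j = 1..k,
   d_j is indexed by j-1 : 'I_k) *)
Record newout (Fe Fu : seq form) (k : nat) := NewOut {
  vout : {g : form | g \in Fe} -> 'I_k.+1;
  pout : {g : form | g \in Fu} -> bool;
  dout : 'I_k -> {set I} }.

Section Reduction.
Variables (Fe Fu : seq form) (k : nat).
Definition lletter := ({set I} * ({set O} * newout Fe Fu k))%type.

Definition vval (l : lletter) (g : form) : nat :=
  if insub g is Some s then vout l.2.2 s : nat else 0.
Definition pval (l : lletter) (g : form) : bool :=
  if insub g is Some s then pout l.2.2 s else false.

Fixpoint prime_form (f : form) : ltl lletter :=
  match f with
  | FTrue => LTrue _
  | FFalse => LAtom (fun _ => false)
  | FOut o => LAtom (fun l : lletter => o \in l.2.1)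
  | FNOut o => LAtom (fun l : lletter => o \notin l.2.1)
  | FIn i => LAtom (fun l : lletter => i \in l.1)
  | FNIn i => LAtom (fun l : lletter => i \notin l.1)
  | FAnd a b => LAnd (prime_form a) (prime_form b)
  | FOr a b => LOr (prime_form a) (prime_form b)
  | FX a => LX (prime_form a)
  | FU a b => LU (prime_form a) (prime_form b)
  | FR a b => LR (prime_form a) (prime_form b)
  | FA _ => LAtom (fun l : lletter => pval l f)
  | FE _ => LAtom (fun l : lletter => vval l f != 0)
  end.

(* proposition d_j (j = i+1): current input equals current value of d_j *)
Definition d_atom (i : 'I_k) : ltl lletter := LAtom (fun l : lletter => l.1 == dout l.2.2 i).
Definition veq_atom (g : form) (j : nat) : ltl lletter := LAtom (fun l : lletter => vval l g == j).
Definition p_atom (g : form) : ltl lletter := LAtom (fun l : lletter => pval l g).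

Definition Phi_LTL_of (Phi : form) : ltl lletter :=
  LAnd (prime_form Phi)
   (LAnd
     (LBigAnd [seq LG (LImp (veq_atom g i.+1)
                           (LImp (LG (d_atom i)) (prime_form (body g))))
              | g <- Fe, i : 'I_k <- enum 'I_k])
     (LBigAnd [seq LG (LImp (p_atom g) (prime_form (body g))) | g <- Fu])).
End Reduction.

Definition Phi_LTL (Phi : form) (k : nat) : ltl (lletter (Fexist Phi) (Funiv Phi) k) :=
  Phi_LTL_of (Fexist Phi) (Funiv Phi) k Phi.

Definition k_of (Phi : form) (Aut : forall g : form, nba (nletter (body g))) : nat :=
  \sum_(g <- Fexist Phi) #|nstate (Aut g)|.

End Defs.

(* Main.v *)
Require Import Defs.
From HB Require Import structures.
From mathcomp Require Import all_boot.
From Stdlib Require Import Classical ClassicalEpsilon FunctionalExtensionality.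

Set Implicit Arguments.
Unset Strict Implicit.
Unset Printing Implicit Defensive.


Section Gen.
Variables (I O : finType).
Notation form := (form I O).

Lemma sfx_sfx T (e : nat -> T) n m : sfx (sfx e n) m = sfx e (n + m).
Proof. by apply: functional_extensionality => j; rewrite /sfx addnA. Qed.

Lemma sfx0 T (e : nat -> T) : sfx e 0 = e.
Proof. by []. Qed.

Lemma csat_shift (lab : seq {set I} -> {set O}) (f : form) w u e :
  csat lab f (w ++ u) e <-> csat (fun x => lab (w ++ x)) f u e.
Proof.
elim: f u e => //=.
- move=> a IHa b IHb u e; by rewrite IHa IHb.
- move=> a IHa b IHb u e; by rewrite IHa IHb.
- by move=> a IHa u e; rewrite rcons_cat IHa.
- move=> a IHa b IHb u e; split=> [[n [H1 H2]]|[n [H1 H2]]]; exists n.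
  + by rewrite -IHb catA; split=> // m Hm; rewrite -IHa catA; apply: H2.
  + by rewrite -catA IHb; split=> // m Hm; rewrite -catA IHa; apply: H2.
- move=> a IHa b IHb u e; split=> H n; case: (H n) => [H1|[m [Hm H1]]].
  + by left; rewrite -IHb catA.
  + by right; exists m; split=> //; rewrite -IHa catA.
  + by left; rewrite -catA IHb.
  + by right; exists m; split=> //; rewrite -catA IHa.
- by move=> a IHa u e; split=> H e'; apply/IHa.
- by move=> a IHa u e; split=> [[e' H]|[e' H]]; exists e'; apply/IHa.
Qed.

Lemma csat_shift0 (lab : seq {set I} -> {set O}) (f : form) w e :
  csat lab f w e <-> csat (fun x => lab (w ++ x)) f [::] e.
Proof. by rewrite -csat_shift cats0. Qed.

Lemma csat_state (lab : seq {set I} -> {set O}) (f : form) w e e' :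
  is_state f -> csat lab f w e -> csat lab f w e'.
Proof.
elim: f w e e' => //=.
- move=> a IHa b IHb w e e' /andP[sa sb] [H1 H2]; split; [exact: IHa H1|exact: IHb H2].
- move=> a IHa b IHb w e e' /andP[sa sb] [H1|H2]; [left; exact: IHa H1|right; exact: IHb H2].
Qed.

Lemma lsat_G Sigma (a : ltl Sigma) w : lsat (LG a) w <-> forall n, lsat a (sfx w n).
Proof.
rewrite /LG /=; split=> H n; first by case: (H n) => // [[m [_ []]]].
by left.
Qed.

Lemma lsat_Imp Sigma (a b : ltl Sigma) w : lsat (LImp a b) w <-> (lsat a w -> lsat b w).
Proof.
rewrite /LImp /=; split; first by case=> // H1 H2.
by move=> H; case: (classic (lsat a w)) => H'; [right; apply: H|left].
Qed.

Lemma lsat_bigand Sigma (s : seq (ltl Sigma)) w :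
  lsat (LBigAnd s) w <-> (forall n, n < size s -> lsat (nth (LTrue _) s n) w).
Proof.
elim: s => [|a s IH] /=; first by split.
rewrite IH; split=> [[H1 H2] [|n] //= Hn|H]; first by apply: H2.
by split; [apply: (H 0)|move=> n Hn; apply: (H n.+1)].
Qed.

Lemma lsat_bigand_map Sigma (T : eqType) (s : seq T) (F : T -> ltl Sigma) w :
  lsat (LBigAnd (map F s)) w <-> (forall x, x \in s -> lsat (F x) w).
Proof.
elim: s => [|a s IH] /=; first by split.
rewrite IH; split=> [[H1 H2] x|H].
  by rewrite in_cons => /orP[/eqP->|/H2].
by split; [apply: H; rewrite mem_head|move=> x Hx; apply: H; rewrite in_cons Hx orbT].
Qed.

Lemma lsat_bigand_cat Sigma (s1 s2 : seq (ltl Sigma)) w :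
  lsat (LBigAnd (s1 ++ s2)) w <-> lsat (LBigAnd s1) w /\ lsat (LBigAnd s2) w.
Proof.
elim: s1 => [|a s IH] /=; first by split=> [H|[]].
by rewrite IH; tauto.
Qed.

Lemma lsat_bigand_allpairs Sigma (S T : eqType) (s : seq S) (t : seq T)
   (F : S -> T -> ltl Sigma) w :
  lsat (LBigAnd [seq F x y | x <- s, y <- t]) w <->
  (forall x y, x \in s -> y \in t -> lsat (F x y) w).
Proof.
elim: s => [|a s IH]; first by split.
rewrite allpairs_cons lsat_bigand_cat lsat_bigand_map IH; split.
  move=> [H1 H2] x y; rewrite in_cons => /orP[/eqP->|Hx] Hy; [exact: H1|exact: H2].
move=> H; split=> [y Hy|x y Hx Hy]; apply: H => //; first by rewrite mem_head.
by rewrite in_cons Hx orbT.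
Qed.

Definition mat In Out (M : moore In Out) (s : mstate M) : moore In Out :=
  Moore s (@mtrans _ _ M) (@mout _ _ M).

Lemma mrun_mat_S In Out (M : moore In Out) (s : mstate M) (e : nat -> In) n :
  mrun (mat s) e n.+1 = mrun (mat (mtrans s (e 0))) (sfx e 1) n.
Proof. by elim: n => //= n ->. Qed.

Lemma mrun_mat_add In Out (M : moore In Out) (s : mstate M) (e : nat -> In) n m :
  mrun (mat s) e (n + m) = mrun (mat (mrun (mat s) e n)) (sfx e n) m.
Proof. by elim: m => [|m IH] //=; rewrite ?addn0 // addnS /= IH /sfx. Qed.

Lemma computation_sfx In Out (M : moore In Out) (s : mstate M) (e : nat -> In) n :
  sfx (computation (mat s) e) n = computation (mat (mrun (mat s) e n)) (sfx e n).
Proof.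
by apply: functional_extensionality => j; rewrite /sfx /computation mrun_mat_add.
Qed.

Lemma foldl_mkseq In Out (M : moore In Out) (s : mstate M) (e : nat -> In) n :
  foldl (@mtrans _ _ M) s (mkseq e n) = mrun (mat s) e n.
Proof. by elim: n => [|n IH] //; rewrite mkseqS foldl_rcons IH. Qed.

End Gen.


Lemma mrun_mat In Out (M : moore In Out) e n : mrun M e n = mrun (mat (minit M)) e n.
Proof. by elim: n => //= n ->. Qed.

Lemma computation_mat In Out (M : moore In Out) e :
  computation M e = computation (mat (minit M)) e.
Proof. by apply: functional_extensionality => j; rewrite /computation mrun_mat. Qed.

Section Sub.
Variables (I O : finType) (Phi : form I O).

Lemma sub_refl (f : form I O) : f \in subformulas f.
Proof. by case: f => *; rewrite mem_head. Qed.

Lemma mem_Fexist g : g \in subformulas Phi -> is_E g -> g \in Fexist Phi.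
Proof. by move=> H1 H2; rewrite mem_undup mem_filter H2. Qed.

Lemma mem_Funiv g : g \in subformulas Phi -> is_A g -> g \in Funiv Phi.
Proof. by move=> H1 H2; rewrite mem_undup mem_filter H2. Qed.

Lemma Fexist_sub g : g \in Fexist Phi -> g \in subformulas Phi /\ is_E g.
Proof. by rewrite mem_undup mem_filter => /andP[]. Qed.

Lemma Funiv_sub g : g \in Funiv Phi -> g \in subformulas Phi /\ is_A g.
Proof. by rewrite mem_undup mem_filter => /andP[]. Qed.

End Sub.

Ltac subw H := let x := fresh "x" in let Hx := fresh "Hx" in move=> x Hx; apply: H => /=; rewrite ?in_cons ?mem_cat Hx ?orTb ?orbT //.

Section Back.
Variables (I O : finType) (Phi : form I O) (k : nat).
Notation Fe := (Fexist Phi).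
Notation Fu := (Funiv Phi).
Variable M : moore {set I} ({set O} * newout Fe Fu k).
Hypothesis HM : forall e, lsat (Phi_LTL Phi k) (computation M e).

Definition Mc : moore {set I} {set O} :=
  Moore (minit M) (@mtrans _ _ M) (fun s => (mout s).1).

Definition stw (w : seq {set I}) : mstate M := foldl (@mtrans _ _ M) (minit M) w.

Lemma mrun_stw w e n : mrun (mat (stw w)) e n = stw (w ++ mkseq e n).
Proof. by rewrite /stw foldl_cat foldl_mkseq. Qed.

Definition pre (w : seq {set I}) (e : nat -> {set I}) : nat -> {set I} :=
  fun n => if n < size w then nth set0 w n else e (n - size w).

Lemma pre_sfx w e : sfx (pre w e) (size w) = e.
Proof.
apply: functional_extensionality => j; rewrite /sfx /pre.
by rewrite ltnNge leq_addr /= addKn.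
Qed.

Lemma pre_mkseq w e : mkseq (pre w e) (size w) = w.
Proof.
rewrite -[RHS](mkseq_nth set0) /mkseq; apply/eq_in_map => j.
by rewrite mem_iota add0n /pre => /andP[_ ->].
Qed.

Lemma root_sfx w e :
  sfx (computation M (pre w e)) (size w) = computation (mat (stw w)) e.
Proof.
rewrite computation_mat computation_sfx pre_sfx; congr (computation (mat _) _).
by rewrite -foldl_mkseq pre_mkseq.
Qed.

Lemma GA w e g : g \in Fu ->
  pval (computation (mat (stw w)) e 0) g ->
  lsat (prime_form Fe Fu k (body g)) (computation (mat (stw w)) e).
Proof.
move=> Hg Hp; have [_ [_ /lsat_bigand_map H]] := HM (pre w e).
have := H g Hg; rewrite lsat_G => /(_ (size w)).
by rewrite root_sfx lsat_Imp; apply.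
Qed.

Lemma GE w e g (i : 'I_k) : g \in Fe ->
  vval (computation (mat (stw w)) e 0) g = i.+1 ->
  (forall n, lsat (d_atom Fe Fu i) (sfx (computation (mat (stw w)) e) n)) ->
  lsat (prime_form Fe Fu k (body g)) (computation (mat (stw w)) e).
Proof.
move=> Hg Hv Hd; have [_ [/lsat_bigand_allpairs H _]] := HM (pre w e).
have := H g i Hg (mem_enum _ i); rewrite lsat_G => /(_ (size w)).
rewrite root_sfx lsat_Imp => H1; move: (H1 (introT eqP Hv)).
by rewrite lsat_Imp; apply; rewrite lsat_G.
Qed.

Lemma back (f : form I O) : {subset subformulas f <= subformulas Phi} ->
  forall w e, lsat (prime_form Fe Fu k f) (computation (mat (stw w)) e) ->
  csat (comp_tree Mc) f w e.
Proof.
elim: f => //=.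
- move=> a IHa b IHb Hs w e [H1 H2]; split; [apply: (IHa _ w e H1)|apply: (IHb _ w e H2)]; subw Hs.
- move=> a IHa b IHb Hs w e [H1|H2]; [left; apply: (IHa _ w e H1)|right; apply: (IHb _ w e H2)]; subw Hs.
- move=> a IHa Hs w e; rewrite computation_sfx mrun_stw /= cats1 => H.
  by apply: (IHa _ _ _ H); subw Hs.
- move=> a IHa b IHb Hs w e [n [H1 H2]]; exists n; split.
    by apply: IHb; [subw Hs|move: H1; rewrite computation_sfx mrun_stw].
  by move=> m Hm; apply: IHa; [subw Hs|move: (H2 m Hm); rewrite computation_sfx mrun_stw].
- move=> a IHa b IHb Hs w e H n; case: (H n) => [H1|[m [Hm H1]]].
    by left; apply: IHb; [subw Hs|move: H1; rewrite computation_sfx mrun_stw].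
  by right; exists m; split=> //; apply: IHa; [subw Hs|move: H1; rewrite computation_sfx mrun_stw].
- move=> a IHa Hs w e Hp e'; apply: IHa; first by subw Hs.
  have HA : FA a \in Fu by apply: mem_Funiv => //; apply: Hs; rewrite mem_head.
  by apply: (GA (g := FA a)).
- move=> a IHa Hs w e Hv.
  have HE : FE a \in Fe by apply: mem_Fexist => //; apply: Hs; rewrite mem_head.
  move: Hv; rewrite /vval insubT /=.
  set j := vout _ _ => Hj.
  have Hi : j.-1 < k by move: (ltn_ord j) Hj; case: (nat_of_ord j).
  pose i := Ordinal Hi.
  pose dir (s : mstate M) := dout (mout s).2 i.
  pose sq := fix sq n := if n is n'.+1 then mtrans (sq n') (dir (sq n')) else stw w.
  pose e' n := dir (sq n).
  have Hrun : forall n, mrun (mat (stw w)) e' n = sq n by elim=> //= n ->.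
  exists e'; apply: IHa; first by subw Hs.
  apply: (GE (g := FE a) (i := i)) => //.
    by rewrite /vval insubT /= -/j /= prednK // lt0n.
  by move=> n; rewrite /sfx /= addn0 /computation /= Hrun.
Qed.

Lemma back_main : ctl_realisable Phi.
Proof.
exists Mc; rewrite /state_sat; apply: (back (f := Phi)) => //.
have [H _] := HM (fun _ => set0); move: H.
by rewrite computation_mat.
Qed.

End Back.


Definition asb (P : Prop) : bool := if excluded_middle_informative P then true else false.
Lemma asbE (P : Prop) : asb P <-> P.
Proof. by rewrite /asb; case: excluded_middle_informative. Qed.

Definition cchoose T (d : T) (P : T -> Prop) : T :=
  match excluded_middle_informative (exists x, P x) with
  | left H => proj1_sig (constructive_indefinite_description _ H)
  | right _ => d end.
Lemma cchooseP T (d : T) (P : T -> Prop) : (exists x, P x) -> P (cchoose d P).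
Proof.
rewrite /cchoose; case: excluded_middle_informative => // H _.
exact: proj2_sig (constructive_indefinite_description _ H).
Qed.

Definition copt T (P : T -> Prop) : option T :=
  match excluded_middle_informative (exists x, P x) with
  | left H => Some (proj1_sig (constructive_indefinite_description _ H))
  | right _ => None end.
Lemma coptP T (P : T -> Prop) :
  (exists x, P x) -> exists2 x, copt P = Some x & P x.
Proof.
rewrite /copt; case: excluded_middle_informative => // H _.
by eexists; [reflexivity|exact: proj2_sig (constructive_indefinite_description _ H)].
Qed.
Lemma coptS T (P : T -> Prop) x : copt P = Some x -> P x.
Proof.
rewrite /copt; case: excluded_middle_informative => // H [<-].
exact: proj2_sig (constructive_indefinite_description _ H).
Qed.

Definition cmin (P : nat -> Prop) : nat :=
  match excluded_middle_informative (exists n, P n) with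
  | left H => ex_minn (P := fun n => asb (P n))
                (let: ex_intro n Hn := H in ex_intro _ n (proj2 (asbE _) Hn))
  | right _ => 0 end.
Lemma cminP (P : nat -> Prop) : (exists n, P n) ->
  P (cmin P) /\ forall n, P n -> cmin P <= n.
Proof.
rewrite /cmin; case: excluded_middle_informative => // H _.
case: ex_minnP => m /asbE Pm Hm; split=> // n /asbE; exact: Hm.
Qed.

Lemma mrun_prefix In Out (M : moore In Out) (e e' : nat -> In) n :
  (forall i, i < n -> e i = e' i) -> mrun M e n = mrun M e' n.
Proof.
elim: n => //= n IH H; rewrite IH ?H // => i Hi; apply: H; exact: ltnW.
Qed.

Section Fwd.
Variables (I O : finType) (M : moore {set I} {set O}).
Notation form := (form I O).
Notation S := (mstate M).
Notation mtr := (@mtrans _ _ M).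

Definition treeL (m : S) : seq {set I} -> {set O} := fun w => mout (foldl mtr m w).
Definition holds (m : S) (f : form) := csat (treeL m) f [::] (fun _ => set0).
Definition hb m f := asb (holds m f).

Lemma csat_treeL m f w e :
  csat (treeL m) f w e <-> csat (treeL (foldl mtr m w)) f [::] e.
Proof.
rewrite csat_shift0; have -> // : (fun x => treeL m (w ++ x)) = treeL (foldl mtr m w).
by apply: functional_extensionality => x; rewrite /treeL foldl_cat.
Qed.

Lemma holds_state m f e : is_state f -> holds m f <-> csat (treeL m) f [::] e.
Proof. by move=> Hf; split; apply: csat_state. Qed.

Definition letter (phi : form) (m : S) (x : {set I}) : nletter phi :=
  (x, fun s => hb m (val s)).
Definition word (phi : form) (m : S) (e : nat -> {set I}) : nat -> nletter phi :=
  fun n => letter phi (mrun (mat m) e n) (e n).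

Lemma word_sfx phi m e n : sfx (word phi m e) n = word phi (mrun (mat m) e n) (sfx e n).
Proof. by apply: functional_extensionality => j; rewrite /word /sfx mrun_mat_add. Qed.

Lemma wsat_state (phi : form) (f : form) (w : nat -> nletter phi) : is_state f -> wsat f w = is_true (atom_val (w 0).2 f).
Proof. by case: f => //= a b ->. Qed.

Lemma atom_case phi f m e : is_state f -> f \in state_atoms phi ->
  wsat f (word phi m e) <-> csat (treeL m) f [::] e.
Proof.
move=> Hs Hin; rewrite wsat_state // /atom_val insubT /= -holds_state //.
exact: asbE.
Qed.

Lemma wsat_csat phi f : {subset state_atoms f <= state_atoms phi} ->
  forall m e, wsat f (word phi m e) <-> csat (treeL m) f [::] e.
Proof.
have st1 g : is_state g -> state_atoms g = [:: g] by case: g => //= a b ->.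
have At g : is_state g -> {subset state_atoms g <= state_atoms phi} ->
  forall m e, wsat g (word phi m e) <-> csat (treeL m) g [::] e.
  by move=> Hg Hs m e; apply: atom_case => //; apply: Hs; rewrite st1 // mem_head.
elim: f => [||o|o|i|i|a IHa b IHb|a IHa b IHb|a IHa|a IHa b IHb|a IHa b IHb|a IHa|a IHa] Hs m e;
  try by apply: At.
- by [].
- by [].
- case Hst: (is_state (FAnd a b)); first by apply: At.
  move: Hs; rewrite /= in Hst *; rewrite Hst => Hs.
  rewrite IHa ?IHb // => x Hx; apply: Hs; rewrite mem_cat Hx ?orbT //.
- case Hst: (is_state (FOr a b)); first by apply: At.
  move: Hs; rewrite /= in Hst *; rewrite Hst => Hs.
  rewrite IHa ?IHb // => x Hx; apply: Hs; rewrite mem_cat Hx ?orbT //.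
- by rewrite /= word_sfx (IHa Hs) (csat_treeL m a [:: e 0]).
- rewrite /=; have Ha : {subset state_atoms a <= state_atoms phi}.
    by move=> x Hx; apply: Hs; rewrite /= mem_cat Hx.
  have Hb : {subset state_atoms b <= state_atoms phi}.
    by move=> x Hx; apply: Hs; rewrite /= mem_cat Hx orbT.
  have Ka n : wsat a (sfx (word phi m e) n) <-> csat (treeL m) a (mkseq e n) (sfx e n).
    by rewrite (word_sfx phi m e n) (IHa Ha) (csat_treeL m a (mkseq e n)) foldl_mkseq.
  have Kb n : wsat b (sfx (word phi m e) n) <-> csat (treeL m) b (mkseq e n) (sfx e n).
    by rewrite (word_sfx phi m e n) (IHb Hb) (csat_treeL m b (mkseq e n)) foldl_mkseq.
  split=> [[n [H1 H2]]|[n [H1 H2]]]; exists n; split; try (by apply/Kb);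
    by move=> j Hj; apply/Ka; apply: H2.
- rewrite /=; have Ha : {subset state_atoms a <= state_atoms phi}.
    by move=> x Hx; apply: Hs; rewrite /= mem_cat Hx.
  have Hb : {subset state_atoms b <= state_atoms phi}.
    by move=> x Hx; apply: Hs; rewrite /= mem_cat Hx orbT.
  have Ka n : wsat a (sfx (word phi m e) n) <-> csat (treeL m) a (mkseq e n) (sfx e n).
    by rewrite (word_sfx phi m e n) (IHa Ha) (csat_treeL m a (mkseq e n)) foldl_mkseq.
  have Kb n : wsat b (sfx (word phi m e) n) <-> csat (treeL m) b (mkseq e n) (sfx e n).
    by rewrite (word_sfx phi m e n) (IHb Hb) (csat_treeL m b (mkseq e n)) foldl_mkseq.
  split=> H n; case: (H n) => [H1|[j [Hj H1]]].
  + by left; apply/Kb.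
  + by right; exists j; split=> //; apply/Ka.
  + by left; apply/Kb.
  + by right; exists j; split=> //; apply/Ka.
Qed.

End Fwd.


Section Strat.
Variables (I O : finType) (M : moore {set I} {set O}).
Variables (phi : form I O) (A : nba (nletter phi)).
Notation S := (mstate M).
Notation mtr := (@mtrans _ _ M).
Notation Q := (nstate A).
Implicit Types (m : S) (p q : Q) (e : nat -> {set I}).

Definition accfrom (w : nat -> nletter phi) (q : Q) :=
  exists r : nat -> Q, [/\ r 0 = q, forall n, ntrans (r n) (w n) (r n.+1)
      & forall n, exists2 j, n <= j & nacc (r j)].

Definition Wn (m : S) (q : Q) := exists e, accfrom (word phi m e) q.

Definition Rn (m : S) (q : Q) (n : nat) :=
  exists e (r : nat -> Q), [/\ r 0 = q, forall n, ntrans (r n) (word phi m e n) (r n.+1),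
      forall n, exists2 j, n <= j & nacc (r j) & nacc (r n)].

Definition rank m q := cmin (Rn m q).

Definition good m q (xq : {set I} * Q) :=
  [/\ ntrans q (letter phi m xq.1) xq.2, Wn (mtr m xq.1) xq.2
    & nacc q \/ rank (mtr m xq.1) xq.2 < rank m q].

Definition strat m q : {set I} * Q := cchoose (set0, q) (good m q).

Lemma word0 m e : word phi m e 0 = letter phi m (e 0).
Proof. by []. Qed.

Lemma word_sfx1 m e : sfx (word phi m e) 1 = word phi (mtr m (e 0)) (sfx e 1).
Proof. by rewrite (word_sfx phi m e 1). Qed.

Lemma strat_good m q : Wn m q -> good m q (strat m q).
Proof.
move=> [e0 [r0 [H0 Ht0 Hb0]]].
have HR : exists n, Rn m q n.
  by case: (Hb0 0) => j _ Hj; exists j, e0, r0.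
have [[e [r [Hr0 Ht Hb Hacc]]] Hmin] := cminP HR.
apply: cchooseP; exists (e 0, r 1) => /=.
have HW : Wn (mtr m (e 0)) (r 1).
  exists (sfx e 1), (sfx r 1); split=> //.
    by move=> n; rewrite -word_sfx1; apply: Ht.
  by move=> n; case: (Hb n.+1) => j Hj Hj'; exists j.-1;
     [by rewrite -ltnS prednK // (leq_ltn_trans _ Hj)|by rewrite /sfx add1n prednK // (leq_ltn_trans _ Hj)].
split=> //; first by rewrite -Hr0 -word0; apply: Ht.
move: Hacc; rewrite /rank; case Hc: (cmin (Rn m q)) => [|c] Hacc.
  by left; rewrite -Hr0.
right; have HR' : Rn (mtr m (e 0)) (r 1) c.
  exists (sfx e 1), (sfx r 1); split=> //.
  - by move=> n; rewrite -word_sfx1; apply: Ht.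
  - by move=> n; case: (Hb n.+1) => j Hj Hj'; exists j.-1;
     [by rewrite -ltnS prednK // (leq_ltn_trans _ Hj)|by rewrite /sfx add1n prednK // (leq_ltn_trans _ Hj)].
have [_ Hmin'] := cminP (ex_intro _ c HR').
by rewrite ltnS; apply: Hmin'.
Qed.

Definition stp (p : S * Q) : S * Q := (mtr p.1 (strat p.1 p.2).1, (strat p.1 p.2).2).
Definition traj m q n : S * Q := iter n stp (m, q).
Definition tin m q n : {set I} := (strat (traj m q n).1 (traj m q n).2).1.

Lemma traj_fst m q n : (traj m q n).1 = mrun (mat m) (tin m q) n.
Proof. by elim: n => //= n <-. Qed.

Lemma traj_W m q : Wn m q -> forall n, Wn (traj m q n).1 (traj m q n).2.
Proof.
move=> HW; elim=> //= n IH; by case: (strat_good IH).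
Qed.

Lemma traj_acc m q : Wn m q -> accfrom (word phi m (tin m q)) q.
Proof.
move=> HW; exists (fun n => (traj m q n).2); split=> //.
  move=> n; rewrite /word -traj_fst.
  by case: (strat_good (traj_W HW n)).
have K d : forall n, rank (traj m q n).1 (traj m q n).2 <= d ->
    exists2 j, n <= j & nacc (traj m q j).2.
  elim: d => [|d IH] n Hn; case: (strat_good (traj_W HW n)) => _ _ [Ha|Hr];
    try by exists n.
  - by move: Hn; rewrite leqn0 => /eqP Hn; rewrite Hn in Hr.
  - have Hn' : rank (traj m q n.+1).1 (traj m q n.+1).2 <= d.
      by rewrite -ltnS; exact: leq_trans Hr Hn.
    have [j Hj Hj'] := IH n.+1 Hn'.
    by exists j => //; apply: ltnW.
by move=> n; apply: (K _ n).
Qed.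

Lemma traj_S m q n : traj m q n.+1 = traj (stp (m, q)).1 (stp (m, q)).2 n.
Proof. by rewrite /traj iterSr; case: (stp (m, q)). Qed.

Lemma tin_S m q n : tin m q n.+1 = tin (stp (m, q)).1 (stp (m, q)).2 n.
Proof. by rewrite /tin traj_S. Qed.

Lemma traj_add m q n j : traj m q (j + n) = iter j stp (traj m q n).
Proof. by rewrite /traj iterD. Qed.

Lemma merge m p q n :
  (forall i, i < n -> tin m p i = tin m q i) ->
  (traj m p n).2 = (traj m q n).2 -> tin m p = tin m q.
Proof.
move=> Hi Hs.
have He : traj m p n = traj m q n.
  by rewrite [traj m p n]surjective_pairing [traj m q n]surjective_pairing
    !traj_fst Hs (mrun_prefix _ Hi).
apply: functional_extensionality => i.
case: (ltnP i n) => Hin; first exact: Hi.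
by rewrite /tin -(subnK Hin) !traj_add He.
Qed.

Lemma reus_init m q : ninit q -> Wn m q -> nba_accepts A (word phi m (tin m q)).
Proof.
move=> Hi HW; have [r [H0 Ht Hb]] := traj_acc HW.
by exists r; split=> //; rewrite H0.
Qed.

Hypothesis HA : nba_for A.

Lemma init_exists m : (exists e, csat (treeL m) phi [::] e) ->
  exists q, ninit q /\ Wn m q.
Proof.
move=> [e He]; have := (wsat_csat (phi := phi) (f := phi) (fun x Hx => Hx) m e).2 He.
move/(HA (word phi m e)) => [r [Hi Ht Hb]].
by exists (r 0); split=> //; exists e, r.
Qed.

Lemma accepts_csat m e : nba_accepts A (word phi m e) -> csat (treeL m) phi [::] e.
Proof.
by move/(HA (word phi m e)); rewrite wsat_csat.
Qed.

End Strat.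


Section Main.
Variables (I O : finType) (Phi : form I O).
Variable Aut : forall g : form I O, nba (nletter (body g)).
Hypothesis HAut : forall g, g \in Fexist Phi -> nba_for (Aut g).
Variable M : moore {set I} {set O}.
Notation S := (mstate M).
Notation mtr := (@mtrans _ _ M).
Notation Fe := (Fexist Phi).
Notation Fu := (Funiv Phi).
Notation k := (k_of Phi Aut).
Notation nT := (size Fe).

Definition gt (t : 'I_nT) := nth FTrue Fe t.
Definition At (t : 'I_nT) := Aut (gt t).
Definition Slot := {t : 'I_nT & nstate (At t)}.

Implicit Types (m : S) (c s : Slot) (e : nat -> {set I}).

Lemma gt_in t : gt t \in Fe.
Proof. by rewrite /gt mem_nth. Qed.

Lemma card_Slot : #|{: Slot}| = k.
Proof.
rewrite /Slot card_tagged /k_of sumnE big_map big_enum /=.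
rewrite (big_nth FTrue) big_mkord; apply: eq_bigr => i _ //.
Qed.

Definition toIdx s : 'I_k := cast_ord card_Slot (enum_rank s).
Definition ofIdx (j : 'I_k) : Slot := enum_val (cast_ord (esym card_Slot) j).
Lemma toIdxK s : ofIdx (toIdx s) = s.
Proof. by rewrite /ofIdx /toIdx cast_ordK enum_rankK. Qed.

Definition stratS m c : {set I} * Slot :=
  ((strat m (tagged c)).1, Tagged (fun t => nstate (At t)) (strat m (tagged c)).2).
Definition trajS m c n : S * Slot :=
  ((traj m (tagged c) n).1, Tagged (fun t => nstate (At t)) (traj m (tagged c) n).2).
Definition tinS m c := tin m (tagged c).
Definition reusS m c : bool :=
  asb (nba_accepts (At (tag c)) (word (body (gt (tag c))) m (tin m (tagged c)))).

Definition nomerge m c1 c2 := forall n, (forall i, i < n -> tinS m c1 i = tinS m c2 i) ->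
  (trajS m c1 n).2 != (trajS m c2 n).2.

Lemma Tagged_inj (t : 'I_nT) (x y : nstate (At t)) :
  Tagged (fun t => nstate (At t)) x = Tagged (fun t => nstate (At t)) y -> x = y.
Proof. by move/eqP; rewrite eq_Tagged /= => /eqP. Qed.

Lemma newmerge m c1 (t : 'I_nT) (q0 : nstate (At t)) : tag c1 = t ->
  ninit q0 -> Wn m q0 -> ~~ reusS m c1 ->
  nomerge m c1 (Tagged (fun t => nstate (At t)) q0) /\ nomerge m (Tagged (fun t => nstate (At t)) q0) c1.
Proof.
case: c1 => t1 p1 /= Ht; subst t1 => Hi HW Hr.
have K : forall n, (forall i, i < n -> tin m p1 i = tin m q0 i) ->
    (traj m p1 n).2 != (traj m q0 n).2.
  move=> n Hin; apply/negP => /eqP Heq; move: Hr; rewrite /reusS /=.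
  rewrite (merge Hin Heq) => /negP; apply; apply/asbE; exact: reus_init.
split=> n Hin; rewrite /trajS /= eq_Tagged /=.
  exact: K.
by rewrite eq_sym; apply: K => i Hi'; symmetry; exact: Hin i Hi'.
Qed.


Local Notation TS x := (Tagged (fun t => nstate (At t)) x).
Local Notation St := (S * {ffun Slot -> option Slot})%type.

Definition need m (t : 'I_nT) : bool := hb m (gt t).
Definition reuse m (base : Slot -> option Slot) (t : 'I_nT) : option Slot :=
  [pick s | if base s is Some c then (tag c == t) && reusS m c else false].
Definition init0 m (t : 'I_nT) : option (nstate (At t)) :=
  copt (fun q : nstate (At t) => ninit q /\ Wn m q).
Definition fresh (base : Slot -> option Slot) (t : 'I_nT) : option Slot :=
  [pick s | (tag s == t) && (base s == None)].
Definition newc m base t : option (Slot * Slot) :=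
  if need m t && (reuse m base t == None) then
    (if fresh base t is Some s then
       (if init0 m t is Some q then Some (s, TS q) else None) else None)
  else None.
Definition eff m (base : Slot -> option Slot) s : option Slot :=
  if base s is Some c then Some c else
  if newc m base (tag s) is Some (s', c) then (if s' == s then Some c else None) else None.
Definition vslot m base t : option Slot :=
  if need m t then (if reuse m base t is Some s then Some s else omap fst (newc m base t))
  else None.

Lemma tagOf_proof (gs : {g : form I O | g \in Fe}) : index (val gs) Fe < nT.
Proof. by rewrite index_mem (valP gs). Qed.
Definition tagOf (gs : {g : form I O | g \in Fe}) : 'I_nT := Ordinal (tagOf_proof gs).

Definition outN (st : St) : newout Fe Fu k :=
  @NewOut I O Fe Fu k
    (fun gs => if vslot st.1 st.2 (tagOf gs) is Some s then lift ord0 (toIdx s) else ord0)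
    (fun gs => hb st.1 (val gs))
    (fun j => if eff st.1 st.2 (ofIdx j) is Some c then (stratS st.1 c).1 else set0).
Definition trN (st : St) (x : {set I}) : St :=
  (mtr st.1 x, [ffun s => if eff st.1 st.2 s is Some c then
        (if (stratS st.1 c).1 == x then Some (stratS st.1 c).2 else None) else None]).
Definition MN : moore {set I} ({set O} * newout Fe Fu k) :=
  @Moore _ _ St (minit M, [ffun => None]) trN (fun st => (mout st.1, outN st)).

Definition InvF m (f : Slot -> option Slot) :=
  (forall s c, f s = Some c -> tag c = tag s) /\
  (forall s1 s2 c1 c2, s1 != s2 -> f s1 = Some c1 -> f s2 = Some c2 ->
     tag c1 = tag c2 -> nomerge m c1 c2).

Lemma nomerge_irr m c : ~ nomerge m c c.
Proof. by move/(_ 0 (fun i (Hi : i < 0) => erefl)); rewrite eqxx. Qed.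

Lemma newcP m base t s c : newc m base t = Some (s, c) ->
  [/\ need m t, reuse m base t = None, tag s = t, base s = None &
      exists2 q : nstate (At t), c = TS q & ninit q /\ Wn m q].
Proof.
rewrite /newc; case: ifP => // /andP[Hn /eqP Hr].
rewrite /fresh; case: pickP => // s' /andP[Ht Hb].
case Hq: (init0 m t) => [q|] // [Es Ec]; subst s'; split=> //; try exact/eqP.
exists q; first by rewrite -Ec.
exact: (coptS Hq).
Qed.

Lemma effE m base s c : eff m base s = Some c ->
  base s = Some c \/ (base s = None /\ newc m base (tag s) = Some (s, c)).
Proof.
rewrite /eff; case Hb: (base s) => [c'|]; first by left.
case Hn: (newc m base (tag s)) => [[s' c']|] //; case: eqP => // <- [<-].
by right.
Qed.

Lemma reuse_none m base t : reuse m base t = None ->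
  forall s c, base s = Some c -> tag c = t -> ~~ reusS m c.
Proof.
rewrite /reuse; case: pickP => // H _ s c Hs Ht; move: (H s); rewrite Hs Ht eqxx /=.
by move=> ->.
Qed.

Lemma eff_inv m base : InvF m base -> InvF m (eff m base).
Proof.
move=> [Ha Hb]; split.
  move=> s c /effE [/Ha //|[_ /newcP [_ _ _ _ [q -> _]]]] //.
move=> s1 s2 c1 c2 Hne /effE H1 /effE H2 Htag.
case: H1 => [H1|[H1 N1]]; case: H2 => [H2|[H2 N2]].
- exact: Hb Hne H1 H2 Htag.
- have [_ Hr Hts Hbs [q Hc [Hq HW]]] := newcP N2.
  have Ht1 : tag c1 = tag s2 by rewrite Htag Hc.
  have Hnr := reuse_none Hr H1 Ht1.
  by rewrite Hc; case: (newmerge Ht1 Hq HW Hnr).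
- have [_ Hr Hts Hbs [q Hc [Hq HW]]] := newcP N1.
  have Ht2 : tag c2 = tag s1 by rewrite -Htag Hc.
  have Hnr := reuse_none Hr H2 Ht2.
  by rewrite Hc; case: (newmerge Ht2 Hq HW Hnr).
- have [_ _ _ _ [q1 Hc1 _]] := newcP N1.
  have [_ _ _ _ [q2 Hc2 _]] := newcP N2.
  have Hts : tag s1 = tag s2 by move: Htag; rewrite Hc1 Hc2.
  by move: N1; rewrite Hts N2 => -[E _]; rewrite E eqxx in Hne.
Qed.

Lemma fresh_some m base t q0 : InvF m base -> reuse m base t = None ->
  init0 m t = Some q0 -> exists s, fresh base t = Some s.
Proof.
move=> [Ha Hb] Hr Hq.
have [Hq0 HW0] : ninit q0 /\ Wn m q0 by exact: (coptS Hq).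
rewrite /fresh; case: pickP => [s _|Hnone]; first by exists s.
exfalso.
pose B := [set s : Slot | tag s == t].
have Hbusy : forall s, s \in B -> exists c, base s = Some c.
  move=> s; rewrite inE => Hs; move: (Hnone s); rewrite Hs /=.
  by case: (base s) => [c|] // _; exists c.
pose h s := odflt s (base s).
have Hinj : {in B &, injective h}.
  move=> s1 s2 H1 H2; have [c1 E1] := Hbusy _ H1; have [c2 E2] := Hbusy _ H2.
  rewrite /h E1 E2 /= => Ec; apply/eqP; apply/negPn/negP => Hne.
  have Ht : tag c1 = tag c2 by rewrite Ec.
  by apply: (nomerge_irr (m := m) (c := c1)); move: (Hb _ _ _ _ Hne E1 E2 Ht); rewrite -Ec.
have Hsub : h @: B \subset B :\ TS q0.
  apply/subsetP => x /imsetP [s Hs ->]; have [c E] := Hbusy _ Hs.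
  move: Hs; rewrite !inE /h E /= => /eqP Hts.
  have Htc : tag c = t by rewrite (Ha _ _ E).
  rewrite Htc eqxx andbT; apply/eqP => Ec.
  have := reuse_none Hr E Htc; rewrite Ec /reusS /=.
  by move/negP; apply; apply/asbE; apply: reus_init.
have := subset_leq_card Hsub; rewrite card_in_imset //.
have HB : TS q0 \in B by rewrite inE.
by rewrite (cardsD1 (TS q0) B) HB add1n ltnn.
Qed.

Lemma step_inv m (base : {ffun Slot -> option Slot}) x : InvF m (eff m base) ->
  InvF (mtr m x) (trN (m, base) x).2.
Proof.
move=> [Ha Hb]; split.
  move=> s c'; rewrite /trN /= ffunE; case E: (eff m base s) => [c|] //.
  by case: eqP => // _ [<-] /=; apply: Ha.
move=> s1 s2 c1' c2' Hne; rewrite /trN /= !ffunE.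
case E1: (eff m base s1) => [c1|] //; case: eqP => // X1 [<-].
case E2: (eff m base s2) => [c2|] //; case: eqP => // X2 [<-] /= Ht.
have HN := Hb _ _ _ _ Hne E1 E2 Ht.
move=> n Hin; have := HN n.+1.
have K : forall i, i < n.+1 -> tinS m c1 i = tinS m c2 i.
  case=> [|i] Hi; first by rewrite /tinS /tin /= -/(stratS m c1).1 X1 -/(stratS m c2).1 X2.
  rewrite /tinS !tin_S /stp /= -/(stratS m c1).1 X1 -/(stratS m c2).1 X2.
  exact: Hin.
move/(_ K); rewrite /trajS !traj_S /stp /=.
by rewrite -/(stratS m c1).1 X1 -/(stratS m c2).1 X2.
Qed.

Definition InvS (st : St) := InvF st.1 st.2.

Lemma InvS_step st x : InvS st -> InvS (trN st x).
Proof. by case: st => m base H; apply: step_inv; apply: eff_inv. Qed.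

Lemma InvS_run st e n : InvS st -> InvS (mrun (mat (M := MN) st) e n).
Proof. by move=> H; elim: n => //= n IH; apply: InvS_step. Qed.

Lemma InvS_init : InvS (minit M, [ffun => None]).
Proof. by split=> [s c|s1 s2 c1 c2 _]; rewrite /= ffunE. Qed.

Lemma mrunN_fst st e n : (mrun (mat (M := MN) st) e n).1 = mrun (mat st.1) e n.
Proof. by elim: n => //= n ->. Qed.


Lemma sub_trans (f x : form I O) : x \in subformulas f -> {subset subformulas x <= subformulas f}.
Proof.
elim: f => [||o|o|i|i|a IHa b IHb|a IHa b IHb|a IHa|a IHa b IHb|a IHa b IHb|a IHa|a IHa] /=;
  rewrite in_cons => /orP[/eqP-> //|H] y Hy; rewrite in_cons; try by [].
all: try by rewrite (IHa H y Hy) orbT.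
all: by move: H; rewrite !mem_cat => /orP[H|H]; [rewrite (IHa H y Hy) ?orbT|rewrite (IHb H y Hy) ?orbT].
Qed.


Lemma holdsE m g : is_E g -> holds m g -> exists e, csat (treeL m) (body g) [::] e.
Proof. by case: g. Qed.

Lemma gt_E t : is_E (gt t).
Proof. by have [_ ->] := Fexist_sub (gt_in t). Qed.

Lemma vslot_some m (base : Slot -> option Slot) t : InvF m base -> need m t ->
  exists s, vslot m base t = Some s.
Proof.
move=> Hinv Hn.
have Hh : holds m (gt t) by apply/asbE.
have [q [Hq0 Hq]] : exists q : nstate (At t), ninit q /\ Wn m q.
  by apply: (init_exists (HAut (gt_in t))); apply: holdsE (gt_E t) Hh.
have [q' Hc _] := coptP (ex_intro (fun q : nstate (At t) => ninit q /\ Wn m q) q (conj Hq0 Hq)).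
rewrite /vslot Hn; case Hr: (reuse m base t) => [s|]; first by exists s.
have Hi : init0 m t = Some q' by [].
have [s Hs] := fresh_some Hinv Hr Hi.
by exists s; rewrite /newc Hn Hr eqxx /= Hs Hi.
Qed.

Lemma vslot_eff m (base : Slot -> option Slot) t s : vslot m base t = Some s ->
  exists c, [/\ eff m base s = Some c, tag c = t & reusS m c].
Proof.
rewrite /vslot; case: (need m t) => //.
case Hr: (reuse m base t) => [s'|].
  move=> [<-]; move: Hr; rewrite /reuse; case: pickP => // s'' Hp [<-].
  move: Hp; case E: (base s'') => [c|] // /andP[/eqP Ht Hre].
  by exists c; rewrite /eff E.
case Hn: (newc m base t) => [[s' c]|] //= [Es]; subst s'.
have [_ _ Hts Hbs [q Hc [Hq HW]]] := newcP Hn.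
exists c; split.
- by rewrite /eff Hbs Hts Hn eqxx.
- by rewrite Hc.
- by rewrite Hc /reusS /=; apply/asbE; apply: reus_init.
Qed.

Lemma fwdL (f : form I O) : {subset subformulas f <= subformulas Phi} ->
  forall st, InvS st -> forall e, csat (treeL st.1) f [::] e ->
  lsat (prime_form Fe Fu k f) (computation (mat (M := MN) st) e).
Proof.
elim: f => [||o|o|i|i|a IHa b IHb|a IHa b IHb|a IHa|a IHa b IHb|a IHa b IHb|a IHa|a IHa]
  Hs st Hst e //=.
- by move=> [H1 H2]; split; [apply: IHa|apply: IHb] => //; subw Hs.
- by move=> [H1|H2]; [left; apply: IHa|right; apply: IHb] => //; subw Hs.
- have K n : csat (treeL st.1) a (mkseq e n) (sfx e n) ->
      lsat (prime_form Fe Fu k a) (sfx (computation (mat (M := MN) st) e) n).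
    move=> H; rewrite computation_sfx; apply: IHa; first by subw Hs.
      exact: InvS_run.
    by rewrite mrunN_fst -foldl_mkseq -csat_treeL.
  exact: (K 1).
- have Ka n : csat (treeL st.1) a (mkseq e n) (sfx e n) ->
      lsat (prime_form Fe Fu k a) (sfx (computation (mat (M := MN) st) e) n).
    move=> H; rewrite computation_sfx; apply: IHa; first by subw Hs.
      exact: InvS_run.
    by rewrite mrunN_fst -foldl_mkseq -csat_treeL.
  have Kb n : csat (treeL st.1) b (mkseq e n) (sfx e n) ->
      lsat (prime_form Fe Fu k b) (sfx (computation (mat (M := MN) st) e) n).
    move=> H; rewrite computation_sfx; apply: IHb; first by subw Hs.
      exact: InvS_run.
    by rewrite mrunN_fst -foldl_mkseq -csat_treeL.
  move=> [n [H1 H2]]; exists n; split; first exact: Kb.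
  by move=> j Hj; apply: Ka; apply: H2.
- have Ka n : csat (treeL st.1) a (mkseq e n) (sfx e n) ->
      lsat (prime_form Fe Fu k a) (sfx (computation (mat (M := MN) st) e) n).
    move=> H; rewrite computation_sfx; apply: IHa; first by subw Hs.
      exact: InvS_run.
    by rewrite mrunN_fst -foldl_mkseq -csat_treeL.
  have Kb n : csat (treeL st.1) b (mkseq e n) (sfx e n) ->
      lsat (prime_form Fe Fu k b) (sfx (computation (mat (M := MN) st) e) n).
    move=> H; rewrite computation_sfx; apply: IHb; first by subw Hs.
      exact: InvS_run.
    by rewrite mrunN_fst -foldl_mkseq -csat_treeL.
  move=> H n; case: (H n) => [H1|[j [Hj H1]]]; first by left; apply: Kb.
  by right; exists j; split=> //; apply: Ka.
- move=> H.
  have HA : FA a \in Fu by apply: mem_Funiv => //; apply: Hs; rewrite mem_head.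
  rewrite /pval insubT /=; apply/asbE => e'; exact: H.
- move=> H.
  have HE : FE a \in Fe by apply: mem_Fexist => //; apply: Hs; rewrite mem_head.
  rewrite /vval insubT /=.
  set t := tagOf _.
  have Hn : need st.1 t.
    by rewrite /need /gt /= nth_index //; apply/asbE.
  have [s ->] := vslot_some Hst Hn.
  by [].
Qed.


Lemma Econj st : InvS st -> forall e g (i : 'I_k), g \in Fe ->
  vval (computation (mat (M := MN) st) e 0) g = i.+1 ->
  (forall n, lsat (d_atom Fe Fu i) (sfx (computation (mat (M := MN) st) e) n)) ->
  lsat (prime_form Fe Fu k (body g)) (computation (mat (M := MN) st) e).
Proof.
move=> Hst e g i Hg; rewrite /vval insubT /=.
set t := tagOf _.
case Hv: (vslot st.1 st.2 t) => [s|] // [Hi] Hd.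
have Hsi : toIdx s = i by apply: val_inj.
have [c [Ec Htc Hre]] := vslot_eff Hv.
move: Ec Hre; case: c Htc => t0 p /= Ht0; subst t0 => Ec Hre.
pose m := st.1.
have K : forall n, let stn := mrun (mat (M := MN) st) e n in
   [/\ stn.1 = (traj m p n).1,
       eff stn.1 stn.2 s = Some (Tagged (fun t => nstate (At t)) (traj m p n).2)
     & e n = tin m p n].
  have Ke : forall n, (mrun (mat (M := MN) st) e n).1 = (traj m p n).1 ->
      eff (mrun (mat (M := MN) st) e n).1 (mrun (mat (M := MN) st) e n).2 s =
        Some (Tagged (fun t => nstate (At t)) (traj m p n).2) ->
      e n = tin m p n.
    move=> n H1 H2; have := Hd n; rewrite /sfx addn0 /= /computation /=.
    by rewrite -Hsi toIdxK H2 /= H1 => /eqP.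
  elim=> [|n [IH1 IH2 IH3]] /=.
    by split=> //; apply: Ke.
  have E1 : (trN (mrun (mat (M := MN) st) e n) (e n)).1 = (traj m p n.+1).1.
    by rewrite /trN /= IH1 IH3.
  have E2 : eff (trN (mrun (mat (M := MN) st) e n) (e n)).1
      (trN (mrun (mat (M := MN) st) e n) (e n)).2 s =
      Some (Tagged (fun t => nstate (At t)) (traj m p n.+1).2).
    rewrite /eff /trN /= ffunE IH2 /stratS /= IH1 -/(tin m p n) -IH3 eqxx.
    by [].
  by split=> //; apply: Ke.
have He : e = tin m p.
  by apply: functional_extensionality => n; have [_ _ ->] := K n.
move: Hre; rewrite /reusS /= => /asbE Hacc.
have Hcs := accepts_csat (HAut (gt_in t)) Hacc.
have Hgt : gt t = g by rewrite /gt /= nth_index.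
rewrite He -Hgt; apply: (fwdL (f := body (gt t))) => //.
have [Hsub HE] := Fexist_sub (gt_in t).
move: Hsub HE; case: (gt t) => // a Hsub _ x Hx.
by apply: (sub_trans Hsub); rewrite /= in_cons Hx orbT.
Qed.

Lemma forward : state_sat (comp_tree M) Phi [::] -> is_state Phi ->
  ltl_realisable (Phi_LTL Phi k).
Proof.
move=> HM HPhi; exists MN => e; rewrite computation_mat.
have H0 : InvS (minit MN) by exact: InvS_init.
split.
  apply: fwdL => //; apply: (csat_state _ HPhi); exact: HM.
split.
  apply/lsat_bigand_allpairs => g i Hg _; apply/lsat_G => n.
  rewrite computation_sfx; apply/lsat_Imp => Hv; apply/lsat_Imp => Hd.
  apply: (Econj (InvS_run _ _ H0) Hg (eqP Hv)).
  by move/lsat_G: Hd.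
apply/lsat_bigand_map => g Hg; apply/lsat_G => n.
rewrite computation_sfx; apply/lsat_Imp => /= Hp.
have [Hsub HA] := Funiv_sub Hg.
move: Hp; rewrite /pval insubT /= => /asbE.
move: Hsub HA; case: g Hg => // a Hg Hsub _ Hh.
apply: fwdL; last exact: Hh.
  by move=> x Hx; apply: (sub_trans Hsub); rewrite /= in_cons Hx orbT.
exact: InvS_run.
Qed.

End Main.

Theorem mainTheorem5 (I O : finType) (Phi : form I O)
  (HPhi : is_state Phi)
  (Aut : forall g : form I O, nba (nletter (body g)))
  (HAut : forall g, g \in Fexist Phi -> nba_for (Aut g)) :
  ctl_realisable Phi <->
  ltl_realisable (Phi_LTL Phi (k_of Phi Aut)).
Proof.
split.
- move=> [M HM]; exact: (forward HAut HM HPhi).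
- move=> [M' HM']; exact: (back_main HM').
Qed.
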